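(* In any execution of the Weakener algorithm (described in the context), for every round $j \ge 0$: if no process reaches the step ''write $\textsc{true}$ into $R_2[j]$'' in round $j$, then neither $p_0$ nor $p_1$ enters round $j+1$.
   Context: Weakener algorithm for $n \ge 3$ processes $p_0,\dots,p_{n-1}$ in an asynchronous shared-memory system. Shared registers, for each $j = 0,1,2,\dots$: $R_1[j]$, a multi-writer multi-reader register initialized to $\bot$; $C_1[j]$, a register written only by $p_0$, initialized to $-1$; $R_2[j]$, a register initialized to $\textsc{false}$. Code of $p_i$ for $i \in \{0,1\}$: for rounds $j=0,1,2,\dots$: (Phase 1) write $i$ into $R_1[j]$; if $i=0$, flip a fair coin (outcome in $\{0,1\}$) and write the outcome into $C_1[j]$; (Phase 2) read $R_2[j]$ into local variable $v_1$; if $v_1 = \textsc{false}$, exit the for loop. After the loop: return. Code of $p_i$ for $i \in \{2,\dots,n-1\}$: for rounds $j=0,1,2,\dots$: (Phase 1) read $R_1[j]$ into $u_1$; read $R_1[j]$ into $u_2$; read $C_1[j]$ into $c_1$; if $u_1 \ne c_1$ or $u_2 \ne 1-c_1$, exit the for loop; (Phase 2) write $\textsc{true}$ into $R_2[j]$. After the loop: return. Registers behave according to their (linearizable) sequential specification: a read returns the initial value or a value written to that register. *)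

(* Defs.v *)
From Stdlib Require Import ZArith List Arith.
Open Scope Z_scope.

(* Program points (local state) of a process.  The round number is the
   first argument.  Local computations (coin flip, comparisons, loop
   exits) are folded into the adjacent shared-memory step. *)
Inductive loc : Type :=
  (* processes p_0, p_1 *)
  | W1  (j : nat)
  | WC  (j : nat)
  | RD2 (j : nat)
  (* processes p_2 .. p_{n-1} *)
  | RA  (j : nat)
  | RB  (j : nat) (u1 : option Z)
  | RC  (j : nat) (u1 u2 : option Z)
  | W2  (j : nat)
  | Done.

(* R1[j] : None = bottom, Some v = value v; C1[j] : Z (initially -1);
   R2[j] : bool (initially false). *)
Record config : Type := mkConfig {
  R1 : nat -> option Z;
  C1 : nat -> Z;
  R2 : nat -> bool;
  pc : nat -> loc
}.

Definition upd {A : Type} (f : nat -> A) (k : nat) (v : A) : nat -> A :=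
  fun x => if Nat.eqb x k then v else f x.

Definition init_config : config :=
  mkConfig (fun _ => None) (fun _ => (-1)%Z) (fun _ => false)
           (fun i => if Nat.leb i 1 then W1 0 else RA 0).

Inductive step (n : nat) (c : config) : config -> Prop :=
  | st_W1 i j : (i < n)%nat -> pc c i = W1 j ->
      step n c (mkConfig (upd (R1 c) j (Some (Z.of_nat i))) (C1 c) (R2 c)
                 (upd (pc c) i (if Nat.eqb i 0 then WC j else RD2 j)))
  | st_WC i j (b : Z) : (i < n)%nat -> pc c i = WC j -> (b = 0 \/ b = 1) ->
      step n c (mkConfig (R1 c) (upd (C1 c) j b) (R2 c) (upd (pc c) i (RD2 j)))
  | st_RD2 i j : (i < n)%nat -> pc c i = RD2 j ->
      step n c (mkConfig (R1 c) (C1 c) (R2 c)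
                 (upd (pc c) i (if R2 c j then W1 (S j) else Done)))
  | st_RA i j : (i < n)%nat -> pc c i = RA j ->
      step n c (mkConfig (R1 c) (C1 c) (R2 c) (upd (pc c) i (RB j (R1 c j))))
  | st_RB i j u1 : (i < n)%nat -> pc c i = RB j u1 ->
      step n c (mkConfig (R1 c) (C1 c) (R2 c) (upd (pc c) i (RC j u1 (R1 c j))))
  | st_RC_exit i j u1 u2 : (i < n)%nat -> pc c i = RC j u1 u2 ->
      (u1 <> Some (C1 c j) \/ u2 <> Some (1 - C1 c j)) ->
      step n c (mkConfig (R1 c) (C1 c) (R2 c) (upd (pc c) i Done))
  | st_RC_cont i j u1 u2 : (i < n)%nat -> pc c i = RC j u1 u2 ->
      u1 = Some (C1 c j) -> u2 = Some (1 - C1 c j) ->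
      step n c (mkConfig (R1 c) (C1 c) (R2 c) (upd (pc c) i (W2 j)))
  | st_W2 i j : (i < n)%nat -> pc c i = W2 j ->
      step n c (mkConfig (R1 c) (C1 c) (upd (R2 c) j true) (upd (pc c) i (RA (S j)))).

(* A (finite prefix of an) execution, as the list of configurations visited,
   most recent first.  Any interleaving (asynchrony) and any coin outcomes
   are allowed. *)
Inductive execution (n : nat) : list config -> Prop :=
  | ex_init : execution n (init_config :: nil)
  | ex_step c c' tr : execution n (c :: tr) -> step n c c' ->
      execution n (c' :: c :: tr).

Definition in_round (j : nat) (l : loc) : Prop :=
  match l with
  | W1 k | WC k | RD2 k | RA k | RB k _ | RC k _ _ | W2 k => k = j
  | Done => False
  end.

(* Main.v *)
Require Import Defs.
From Stdlib Require Import ZArith List Arith Lia.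

Definition good (j : nat) (l : loc) : Prop :=
  match l with
  | W1 k | WC k | RD2 k => (k <= j)%nat
  | Done => True
  | _ => False
  end.

Definition Inv (j : nat) (c : config) : Prop :=
  R2 c j = false /\ forall i, (i <= 1)%nat -> good j (pc c i).

Lemma inv_init j : Inv j init_config.
Proof.
  split; [reflexivity|]. intros i Hi. simpl.
  destruct (Nat.leb_spec i 1); [simpl; lia | lia].
Qed.

Lemma inv_step n j c c' : Inv j c -> step n c c' ->
  (forall i, (i < n)%nat -> pc c i <> W2 j) -> Inv j c'.
Proof.
  intros [HR Hg] Hs Hno.
  destruct Hs; simpl; unfold upd.
  all: try (split; [assumption|]).
  all: try (intros i' Hi'; cbn; destruct (Nat.eqb_spec i' i) as [->|]; [|apply Hg; lia]).
  - specialize (Hg i Hi'). rewrite H0 in Hg. simpl in Hg.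
    destruct (Nat.eqb i 0); simpl; lia.
  - specialize (Hg i Hi'). rewrite H0 in Hg. simpl in Hg. simpl; lia.
  - specialize (Hg i Hi'). rewrite H0 in Hg. simpl in Hg.
    destruct (Nat.eq_dec j0 j) as [->|].
    + rewrite HR. simpl. exact I.
    + destruct (R2 c j0); simpl; lia.
  - specialize (Hg i Hi'). rewrite H0 in Hg. contradiction.
  - specialize (Hg i Hi'). rewrite H0 in Hg. contradiction.
  - specialize (Hg i Hi'). rewrite H0 in Hg. contradiction.
  - specialize (Hg i Hi'). rewrite H0 in Hg. contradiction.
  - split.
    + cbn. destruct (Nat.eqb_spec j j0) as [->|]; [|assumption].
      exfalso. exact (Hno i H H0).
    + intros i' Hi'. cbn. destruct (Nat.eqb_spec i' i) as [->|]; [|apply Hg; lia].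
      specialize (Hg i Hi'). rewrite H0 in Hg. contradiction.
Qed.

Lemma inv_all n j tr : execution n tr ->
  (forall c i, In c tr -> (i < n)%nat -> pc c i <> W2 j) ->
  forall c, In c tr -> Inv j c.
Proof.
  induction 1; intros Hno c0 Hin.
  - destruct Hin as [<-|[]]. apply inv_init.
  - assert (IH : forall c1, In c1 (c :: tr) -> Inv j c1).
    { apply IHexecution. intros c1 i Hc1 Hi. apply Hno; [right; exact Hc1|exact Hi]. }
    destruct Hin as [<-|Hin]; [|apply IH; exact Hin].
    apply (inv_step n j c c'); [apply IH; left; reflexivity|exact H0|].
    intros i Hi. apply Hno; [right; left; reflexivity|exact Hi].
Qed.

Lemma good_not j l : good j l -> ~ in_round (S j) l.
Proof. destruct l; simpl; intros; lia. Qed.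

Theorem lemma1 (n : nat) (Hn : (3 <= n)%nat) (tr : list config)
  (Hex : execution n tr) (j : nat) :
  (* no process reaches the step "write TRUE into R2[j]" in round j *)
  (forall c i, In c tr -> (i < n)%nat -> pc c i <> W2 j) ->
  (* then neither p_0 nor p_1 ever enters round j+1 *)
  forall c, In c tr -> ~ in_round (S j) (pc c 0) /\ ~ in_round (S j) (pc c 1).
Proof.
  intros Hno c Hin.
  destruct (inv_all n j tr Hex Hno c Hin) as [_ Hg].
  split; apply good_not; apply Hg; lia.
Qed.
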